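(* Let $T\in\mathcal T_h^i$ be an interface element with plane $\tau(T)$, unit normal $\bar{\mathbf n}$ and point $F$ as in the context, and let $\beta^+\ge\beta^->0$. For every $p\in\mathbb Q_1$ there is exactly one $q\in\mathbb Q_1$ such that (i) $q=p$ on $\tau(T)$, (ii) $p$ and $q$ have the same coefficients of the monomials $xy,yz,xz,xyz$, and (iii) $\beta^-\nabla p(F)\cdot\bar{\mathbf n}=\beta^+\nabla q(F)\cdot\bar{\mathbf n}$. Consequently the operator $\mathcal C_T:\mathbb Q_1\to\mathbb Q_1$, $\mathcal C_T(p)=q$, is well defined, and it is bijective on $\mathbb Q_1$.
   Context: $\mathbb Q_1$ is the space of trilinear polynomials on $\mathbb R^3$, i.e. the span of $x^ay^bz^c$ with $a,b,c\in\{0,1\}$. $\Omega\subset\mathbb R^3$ is a bounded domain (a union of finitely many rectangular parallelepipeds) with a closed $C^2$ surface $\Gamma$ separating it into $\Omega^-$ and $\Omega^+$; $\beta$ equals the positive constant $\beta^\pm$ on $\Omega^\pm$, and it is assumed $\beta^+\ge\beta^-$. $\mathcal T_h$ is a Cartesian mesh by cubes of edge length $h$ such that $\Gamma$ meets every mesh edge in at most one point and the boundary of every mesh face in at most two points, with no vertex on $\Gamma$. For an interface element $T$ (i.e. $T\cap\Gamma\neq\emptyset$), $K_T$ is a triangle whose three vertices are points where $\Gamma$ meets edges of $T$, chosen by a fixed rule (Case 1, $\Gamma$ cuts 3 faces: the three points; Case 2, $\Gamma$ cuts 4 faces separating the endpoints of an edge $e$ from the other vertices: the three points farthest from $e$;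 Case 3, four points on four parallel edges: any three; Case 4, $\Gamma$ cuts 5 faces: the three points on three parallel edges; Case 5, $\Gamma$ cuts 6 faces: every other one of the six points, lying on three mutually orthogonal edges). $\tau(T)$ is the plane containing $K_T$, $\bar{\mathbf n}$ a unit normal of $\tau(T)$, and $F$ the centroid of $K_T$. *)

(* Defs.v *)
From HB Require Import structures.
From mathcomp Require Import all_boot all_order all_algebra.
From mathcomp Require Import reals.
Set Implicit Arguments. Unset Strict Implicit. Unset Printing Implicit Defensive.
Import Order.TTheory GRing.Theory Num.Theory.
Local Open Scope ring_scope.

Section Defs.
Variable R : realType.

Definition vec3 := (R * R * R)%type.
Definition vx (v : vec3) : R := v.1.1.
Definition vy (v : vec3) : R := v.1.2.
Definition vz (v : vec3) : R := v.2.
Definition vadd (u v : vec3) : vec3 := (vx u + vx v, vy u + vy v, vz u + vz v).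
Definition vsub (u v : vec3) : vec3 := (vx u - vx v, vy u - vy v, vz u - vz v).
Definition vscale (s : R) (v : vec3) : vec3 := (s * vx v, s * vy v, s * vz v).
Definition dot (u v : vec3) : R := vx u * vx v + vy u * vy v + vz u * vz v.
Definition cross (u v : vec3) : vec3 :=
  (vy u * vz v - vz u * vy v, vz u * vx v - vx u * vz v, vx u * vy v - vy u * vx v).

(* Q1: trilinear polynomials, given by their 8 coefficients on the monomial
   basis 1, x, y, z, xy, yz, xz, xyz. *)
Record Q1 := mkQ1 {
  c1 : R; cx : R; cy : R; cz : R; cxy : R; cyz : R; cxz : R; cxyz : R }.

Definition Q1eval (p : Q1) (X : vec3) : R :=
  let x := vx X in let y := vy X in let z := vz X in
  c1 p + cx p * x + cy p * y + cz p * z + cxy p * (x * y) + cyz p * (y * z)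
  + cxz p * (x * z) + cxyz p * (x * y * z).

Definition Q1grad (p : Q1) (X : vec3) : vec3 :=
  let x := vx X in let y := vy X in let z := vz X in
  (cx p + cxy p * y + cxz p * z + cxyz p * (y * z),
   cy p + cxy p * x + cyz p * z + cxyz p * (x * z),
   cz p + cyz p * y + cxz p * x + cxyz p * (x * y)).

(* The cube T = [a1,a1+h] x [a2,a2+h] x [a3,a3+h] given by its lowest vertex a. *)
Definition is_end (a h t : R) := (t == a) || (t == a + h).
Definition is_inside (a h t : R) := (a < t) && (t < a + h).

Definition on_edge (a : vec3) (h : R) (X : vec3) : Prop :=
  [|| is_inside (vx a) h (vx X) && is_end (vy a) h (vy X) && is_end (vz a) h (vz X),
      is_end (vx a) h (vx X) && is_inside (vy a) h (vy X) && is_end (vz a) h (vz X)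
    | is_end (vx a) h (vx X) && is_end (vy a) h (vy X) && is_inside (vz a) h (vz X)].

Definition in_plane (P1 P2 P3 X : vec3) : Prop :=
  exists s t : R, X = vadd P1 (vadd (vscale s (vsub P2 P1)) (vscale t (vsub P3 P1))).

Definition centroid (P1 P2 P3 : vec3) : vec3 :=
  vscale (3%:R)^-1 (vadd P1 (vadd P2 P3)).

Definition CT_cond (betam betap : R) (P1 P2 P3 n : vec3) (p q : Q1) : Prop :=
  [/\ (forall X, in_plane P1 P2 P3 X -> Q1eval q X = Q1eval p X),
      [/\ cxy q = cxy p, cyz q = cyz p, cxz q = cxz p & cxyz q = cxyz p]
    & betam * dot (Q1grad p (centroid P1 P2 P3)) n
      = betap * dot (Q1grad q (centroid P1 P2 P3)) n].

End Defs.

(* Main.v *)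
Require Import Defs.
From HB Require Import structures.
From mathcomp Require Import all_boot all_order all_algebra.
From mathcomp Require Import reals ring lra.
Import Order.TTheory GRing.Theory Num.Theory.
Local Open Scope ring_scope.

Lemma orth3 (R : realFieldType) (u1 u2 u3 v1 v2 v3 n1 n2 n3 g1 g2 g3 : R) :
  ~ [/\ u2*v3 - u3*v2 = 0, u3*v1 - u1*v3 = 0 & u1*v2 - u2*v1 = 0] ->
  n1*n1 + n2*n2 + n3*n3 = 1 ->
  n1*u1 + n2*u2 + n3*u3 = 0 -> n1*v1 + n2*v2 + n3*v3 = 0 ->
  g1*u1 + g2*u2 + g3*u3 = 0 -> g1*v1 + g2*v2 + g3*v3 = 0 ->
  g1*n1 + g2*n2 + g3*n3 = 0 -> [/\ g1 = 0, g2 = 0 & g3 = 0].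
Proof.
move=> hc hn hnu hnv hgu hgv hgn.
set c1 := u2*v3 - u3*v2; set c2 := u3*v1 - u1*v3; set c3 := u1*v2 - u2*v1.
set det := n1*c1 + n2*c2 + n3*c3.
have hdet : det != 0.
  have e : det ^+ 2 = (c1*c1+c2*c2+c3*c3) * (n1*n1 + n2*n2 + n3*n3)
     - ((c2*n3 - c3*n2)^+2 + (c3*n1 - c1*n3)^+2 + (c1*n2-c2*n1)^+2).
    rewrite /det; ring.
  have x1 : c2*n3 - c3*n2 = v1*(n1*u1 + n2*u2 + n3*u3) - u1*(n1*v1 + n2*v2 + n3*v3).
    rewrite /c2 /c3; ring.
  have x2 : c3*n1 - c1*n3 = v2*(n1*u1 + n2*u2 + n3*u3) - u2*(n1*v1 + n2*v2 + n3*v3).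
    rewrite /c1 /c3; ring.
  have x3 : c1*n2 - c2*n1 = v3*(n1*u1 + n2*u2 + n3*u3) - u3*(n1*v1 + n2*v2 + n3*v3).
    rewrite /c1 /c2; ring.
  rewrite x1 x2 x3 hnu hnv hn in e.
  apply/eqP => d0; apply: hc; move: e; rewrite d0 => e.
  have : c1*c1+c2*c2+c3*c3 = 0 by move: e; rewrite !mulr0 !subrr; lra.
  move=> s0.
  have h1 : c1 = 0 by apply/eqP; rewrite -sqrf_eq0; apply/eqP; nra.
  have h2 : c2 = 0 by apply/eqP; rewrite -sqrf_eq0; apply/eqP; nra.
  have h3 : c3 = 0 by apply/eqP; rewrite -sqrf_eq0; apply/eqP; nra.
  by [].
have k1 : det * g1 = (g1*u1 + g2*u2 + g3*u3)*(v2*n3-v3*n2) + (g1*v1 + g2*v2 + g3*v3)*(n2*u3-n3*u2) + (g1*n1 + g2*n2 + g3*n3)*c1.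
  rewrite /det /c1 /c2 /c3; ring.
have k2 : det * g2 = (g1*u1 + g2*u2 + g3*u3)*(v3*n1-v1*n3) + (g1*v1 + g2*v2 + g3*v3)*(n3*u1-n1*u3) + (g1*n1 + g2*n2 + g3*n3)*c2.
  rewrite /det /c1 /c2 /c3; ring.
have k3 : det * g3 = (g1*u1 + g2*u2 + g3*u3)*(v1*n2-v2*n1) + (g1*v1 + g2*v2 + g3*v3)*(n1*u2-n2*u1) + (g1*n1 + g2*n2 + g3*n3)*c3.
  rewrite /det /c1 /c2 /c3; ring.
rewrite hgu hgv hgn !mul0r !addr0 in k1 k2 k3.
by split; [move: k1|move: k2|move: k3] => /eqP; rewrite mulf_eq0 (negPf hdet) /= => /eqP.
Qed.

Section Main.
Variable R : realType.

Definition Eexp (bm bp : R) (P1 P2 P3 n : vec3 R) (p : Q1 R) : Q1 R :=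
 let lam := (bm - bp) / bp * dot (Q1grad p (centroid P1 P2 P3)) n in
 mkQ1 (c1 p - lam * dot n P1) (cx p + lam * vx n) (cy p + lam * vy n)
   (cz p + lam * vz n) (cxy p) (cyz p) (cxz p) (cxyz p).

Lemma CT_swap bm bp P1 P2 P3 n (p q : Q1 R) :
  CT_cond bm bp P1 P2 P3 n p q -> CT_cond bp bm P1 P2 P3 n q p.
Proof.
case=> h1 [e1 e2 e3 e4] h3; split.
- by move=> X /h1 ->.
- by split.
- by rewrite h3.
Qed.

Lemma CT_exists bm bp (P1 P2 P3 n : vec3 R) (p : Q1 R) :
  bp != 0 -> dot n n = 1 -> dot n (vsub P2 P1) = 0 -> dot n (vsub P3 P1) = 0 ->
  CT_cond bm bp P1 P2 P3 n p (Eexp bm bp P1 P2 P3 n p).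
Proof.
move=> hbp hn hu hv.
set lam := (bm - bp) / bp * dot (Q1grad p (centroid P1 P2 P3)) n.
split.
- move=> X [s [t ->]].
  have e : Q1eval (Eexp bm bp P1 P2 P3 n p)
      (vadd P1 (vadd (vscale s (vsub P2 P1)) (vscale t (vsub P3 P1))))
    = Q1eval p (vadd P1 (vadd (vscale s (vsub P2 P1)) (vscale t (vsub P3 P1))))
      + lam * (s * dot n (vsub P2 P1) + t * dot n (vsub P3 P1)).
    rewrite /Q1eval /Eexp /= -/lam /dot /vadd /vscale /vsub /vx /vy /vz /=; ring.
  by rewrite e hu hv !mulr0 addr0 mulr0 addr0.
- by split.
- have e : dot (Q1grad (Eexp bm bp P1 P2 P3 n p) (centroid P1 P2 P3)) n
         = dot (Q1grad p (centroid P1 P2 P3)) n + lam * dot n n.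
    rewrite /Q1grad /Eexp /= -/lam /dot /vx /vy /vz /=; ring.
  rewrite e hn mulr1 /lam; field; exact: hbp.
Qed.

Lemma plane_pts (P1 P2 P3 : vec3 R) :
  in_plane P1 P2 P3 P1 /\ in_plane P1 P2 P3 P2 /\ in_plane P1 P2 P3 P3.
Proof.
case: P1 => [[x1 y1] z1]; case: P2 => [[x2 y2] z2]; case: P3 => [[x3 y3] z3].
split; [exists 0, 0|split; [exists 1, 0|exists 0, 1]];
rewrite /vadd /vscale /vsub /vx /vy /vz /=; congr (_, _, _); ring.
Qed.

Lemma CT_unique bm bp (P1 P2 P3 n : vec3 R) (p q1 q2 : Q1 R) :
  bp != 0 -> cross (vsub P2 P1) (vsub P3 P1) != (0, 0, 0) ->
  dot n n = 1 -> dot n (vsub P2 P1) = 0 -> dot n (vsub P3 P1) = 0 ->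
  CT_cond bm bp P1 P2 P3 n p q1 -> CT_cond bm bp P1 P2 P3 n p q2 -> q1 = q2.
Proof.
move=> hbp hc hn hu hv [i1 [a1 b1 c1' d1] g1] [i2 [a2 b2 c2' d2] g2].
have ev X : in_plane P1 P2 P3 X -> Q1eval q1 X = Q1eval q2 X.
  by move=> hX; rewrite i1 // i2.
have [pl1 [pl2 pl3]] := plane_pts P1 P2 P3.
have e1 := ev _ pl1; have e2 := ev _ pl2; have e3 := ev _ pl3.
have g : dot (Q1grad q1 (centroid P1 P2 P3)) n = dot (Q1grad q2 (centroid P1 P2 P3)) n.
  by apply: (mulfI hbp); rewrite -g1 -g2.
move: hc hn hu hv e1 e2 e3 g; clear ev i1 i2 g1 g2 pl1 pl2 pl3.
case: q1 a1 b1 c1' d1 => k1 kx ky kz kxy kyz kxz kxyz /= -> -> -> ->.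
case: q2 a2 b2 c2' d2 => l1 lx ly lz lxy lyz lxz lxyz /= -> -> -> ->.
case: P1 => [[x1 y1] z1]; case: P2 => [[x2 y2] z2]; case: P3 => [[x3 y3] z3].
case: n => [[n1 n2] n3].
rewrite /Q1eval /Q1grad /dot /cross /vsub /vx /vy /vz /= => hc hn hu hv e1 e2 e3 g.
have [G1 G2 G3] : [/\ kx - lx = 0, ky - ly = 0 & kz - lz = 0].
  apply: (@orth3 R (x2-x1) (y2-y1) (z2-z1) (x3-x1) (y3-y1) (z3-z1) n1 n2 n3).
  - case=> h1 h2 h3; move: hc; rewrite h1 h2 h3; by rewrite eqxx.
  - by [].
  - by [].
  - by [].
  - move: e1 e2; lra.
  - move: e1 e3; lra.
  - move: g; lra.
have ex : kx = lx by apply/eqP; rewrite -subr_eq0 G1.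
have ey : ky = ly by apply/eqP; rewrite -subr_eq0 G2.
have ez : kz = lz by apply/eqP; rewrite -subr_eq0 G3.
subst; congr mkQ1; lra.
Qed.

End Main.
Arguments CT_exists {R}.
Arguments CT_unique {R bm bp P1 P2 P3 n p q1 q2}.
Arguments CT_swap {R}.
Arguments Eexp {R}.

Theorem theorem3p1 (R : realType) (a : vec3 R) (h : R) (P1 P2 P3 n : vec3 R)
    (betam betap : R) :
  0 < h ->
  on_edge a h P1 -> on_edge a h P2 -> on_edge a h P3 ->
  cross (vsub P2 P1) (vsub P3 P1) != (0, 0, 0) ->
  dot n n = 1 -> dot n (vsub P2 P1) = 0 -> dot n (vsub P3 P1) = 0 ->
  0 < betam -> betam <= betap ->
  (forall p : Q1 R, exists! q : Q1 R, CT_cond betam betap P1 P2 P3 n p q) /\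
  (forall C : Q1 R -> Q1 R,
      (forall p, CT_cond betam betap P1 P2 P3 n p (C p)) -> bijective C).
Proof.
move=> _ _ _ _ hc hn hu hv hbm hle.
have hbp : betap != 0 by rewrite gt_eqF // (lt_le_trans hbm hle).
have hbm' : betam != 0 by rewrite gt_eqF.
split.
  move=> p; exists (Eexp betam betap P1 P2 P3 n p); split.
    exact: CT_exists.
  move=> q hq; apply: (CT_unique hbp hc hn hu hv _ hq); exact: CT_exists.
move=> C hC.
exists (Eexp betap betam P1 P2 P3 n) => x.
  apply: (CT_unique hbm' hc hn hu hv (CT_exists betap betam P1 P2 P3 n (C x) hbm' hn hu hv)).
  exact: CT_swap.
apply: (CT_unique hbp hc hn hu hv (hC _)).
apply: CT_swap; exact: CT_exists.
Qed.
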